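(* Let $P\in\{0,1\}^{k\times\ell}$ be a pattern with two rows $r_1<r_2$ and two columns $c_1<c_2$ of one of the following two types: Type 1: $\mathrm{supp}(P)\subseteq([r_1,r_2]\times\{c_1\})\cup\big(\{r_1,r_2\}\times([c_1]\cup\{c_2\})\big)$; Type 2: $\mathrm{supp}(P)\subseteq([r_1,r_2]\times\{c_1\})\cup\big(\{r_2\}\times([c_1]\cup\{c_2\})\big)\cup([r_1]\times\{c_2\})$. If $e=(r_1,c_1)$ is a 1-entry of $P$, then $e$ is row-bounding.
   Context: All matrices are binary; rows numbered top to bottom, columns left to right; $(i,j)$ is the entry in row $i$, column $j$; $\mathrm{supp}$ is the set of 1-entries; $[a,b]=\{a,\dots,b\}$, $[n]=[1,n]$. $M\Delta f$ is $M$ with the value of entry $f$ switched. An embedding of $P\in\{0,1\}^{k\times\ell}$ into $M\in\{0,1\}^{m\times n}$ is a map $\phi:[k]\times[\ell]\to[m]\times[n]$ sending 1-entries to 1-entries such that if $e_1=(i_1,j_1)$, $e_2=(i_2,j_2)$ map to $(i_1^*,j_1^* )$, $(i_2^*,j_2^* )$, then $i_1<i_2\Rightarrow i_1^*<i_2^*$ and $j_1<j_2\Rightarrow j_1^*<j_2^*$. $M$ avoids $P$ if no embedding exists; $\mathrm{Av}(P)$ is the set of $P$-avoiding matrices. For a 1-entry $e$ of $P$ and $M\in\mathrm{Av}(P)$, a 0-entry $f$ of $M$ is critical for $e$ if some embedding of $P$ into $M\Delta f$ maps $e$ to $f$; a horizontal 0-run (maximal run of consecutive 0-entries in a row) is critical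 for $e$ if it contains a 0-entry critical for $e$. $e$ is row-bounding if there is a constant $K$ such that for every $M\in\mathrm{Av}(P)$ every row of $M$ contains at most $K$ horizontal 0-runs critical for $e$. *)

(* Defs.v *)
(* Binary matrices are 'M[bool]_(m, n); indices are 0-based
   ('I_m), so the paper's row/column i corresponds to ordinal i-1. *)
From mathcomp Require Import all_boot all_order all_algebra.
Set Implicit Arguments. Unset Strict Implicit. Unset Printing Implicit Defensive.

Definition switch_entry (m n : nat) (M : 'M[bool]_(m, n)) (f : 'I_m * 'I_n)
  : 'M[bool]_(m, n) :=
  \matrix_(i, j) (if (i, j) == f then ~~ M i j else M i j).

Definition is_embedding (k l m n : nat) (P : 'M[bool]_(k, l)) (M : 'M[bool]_(m, n))
  (phi : 'I_k * 'I_l -> 'I_m * 'I_n) : Prop :=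
  (forall e : 'I_k * 'I_l, P e.1 e.2 -> M (phi e).1 (phi e).2) /\
  (forall e1 e2 : 'I_k * 'I_l,
      (e1.1 < e2.1)%N -> ((phi e1).1 < (phi e2).1)%N) /\
  (forall e1 e2 : 'I_k * 'I_l,
      (e1.2 < e2.2)%N -> ((phi e1).2 < (phi e2).2)%N).

Definition avoids (k l m n : nat) (P : 'M[bool]_(k, l)) (M : 'M[bool]_(m, n)) : Prop :=
  ~ exists phi, is_embedding P M phi.

Definition critical_entry (k l m n : nat) (P : 'M[bool]_(k, l)) (e : 'I_k * 'I_l)
  (M : 'M[bool]_(m, n)) (f : 'I_m * 'I_n) : Prop :=
  M f.1 f.2 = false /\
  exists phi, is_embedding P (switch_entry M f) phi /\ phi e = f.

Definition hzero_run (m n : nat) (M : 'M[bool]_(m, n)) (i : 'I_m) (a b : 'I_n) : Prop :=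
  (a <= b)%N /\
  (forall j : 'I_n, (a <= j <= b)%N -> M i j = false) /\
  (forall j : 'I_n, j.+1 = a -> M i j = true) /\
  (forall j : 'I_n, j = b.+1 :> nat -> M i j = true).

Definition critical_run (k l m n : nat) (P : 'M[bool]_(k, l)) (e : 'I_k * 'I_l)
  (M : 'M[bool]_(m, n)) (i : 'I_m) (a b : 'I_n) : Prop :=
  hzero_run M i a b /\
  exists j : 'I_n, (a <= j <= b)%N /\ critical_entry P e M (i, j).

(* e is row-bounding for P: a uniform bound K on the number of horizontal
   0-runs critical for e in any row of any P-avoiding matrix.  Runs are
   identified by their pair of endpoints (a, b). *)
Definition row_bounding (k l : nat) (P : 'M[bool]_(k, l)) (e : 'I_k * 'I_l) : Prop :=
  exists K : nat, forall (m n : nat) (M : 'M[bool]_(m, n)), avoids P M ->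
    forall (i : 'I_m) (R : seq ('I_n * 'I_n)), uniq R ->
      (forall ab, ab \in R -> critical_run P e M i ab.1 ab.2) ->
      (size R <= K)%N.

(* Type 1 and Type 2 support conditions (0-based: paper's [c1] = {0..c1}). *)
Definition pattern_type1 (k l : nat) (P : 'M[bool]_(k, l)) (r1 r2 : 'I_k) (c1 c2 : 'I_l)
  : Prop :=
  forall (i : 'I_k) (j : 'I_l), P i j ->
    ((r1 <= i <= r2)%N /\ j = c1) \/
    ((i = r1 \/ i = r2) /\ ((j <= c1)%N \/ j = c2)).

Definition pattern_type2 (k l : nat) (P : 'M[bool]_(k, l)) (r1 r2 : 'I_k) (c1 c2 : 'I_l)
  : Prop :=
  forall (i : 'I_k) (j : 'I_l), P i j ->
    ((r1 <= i <= r2)%N /\ j = c1) \/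
    (i = r2 /\ ((j <= c1)%N \/ j = c2)) \/
    ((i <= r1)%N /\ j = c2).

(* Main.v *)
Require Import Defs.
From mathcomp Require Import all_boot all_order all_algebra zify.
From Stdlib Require Import IndefiniteDescription.
Set Implicit Arguments. Unset Strict Implicit. Unset Printing Implicit Defensive.

Definition winb (e : nat -> nat) (a v : nat) : bool :=
  ((a == 0) || (e a.-1 < v)) && (v <= e a).

Lemma incr_le (e : nat -> nat) (k : nat) :
  (forall a, a.+1 < k -> e a < e a.+1) ->
  forall a b, a <= b -> b < k -> e a <= e b.
Proof.
move=> He a b Hab; elim: b Hab => [|b IH] Hab Hb.
  by rewrite leqn0 in Hab; move/eqP: Hab => ->.
case: (ltngtP a b.+1) Hab => // [Hlt|->] _.
  have := IH Hlt (ltnW Hb); have := He b Hb; lia.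
done.
Qed.

Lemma block_embed (k l m n : nat) (P : 'M[bool]_(k, l)) (M : 'M[bool]_(m, n))
  (i0 : 'I_m) (j0 : 'I_n) (er ec : nat -> nat) :
  (forall a, a.+1 < k -> er a < er a.+1) -> er k.-1 < m ->
  (forall b, b.+1 < l -> ec b < ec b.+1) -> ec l.-1 < n ->
  (forall x : 'I_k * 'I_l, P x.1 x.2 ->
     exists w : 'I_m * 'I_n, M w.1 w.2 && winb er x.1 w.1 && winb ec x.2 w.2) ->
  exists phi, is_embedding P M phi.
Proof.
move=> Her Herm Hec Hecn Hw.
have erm : forall a, a < k -> er a < m.
  move=> a Ha; have := incr_le Her (a:=a) (b:=k.-1); lia.
have ecn : forall b, b < l -> ec b < n.
  move=> b Hb; have := incr_le Hec (a:=b) (b:=l.-1); lia.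
pose dflt (x : 'I_k * 'I_l) : 'I_m * 'I_n := (insubd i0 (er x.1), insubd j0 (ec x.2)).
pose phi (x : 'I_k * 'I_l) : 'I_m * 'I_n :=
  if [pick w | M w.1 w.2 && winb er x.1 w.1 && winb ec x.2 w.2] is Some w then w
  else dflt x.
have Hwin : forall x : 'I_k * 'I_l, winb er x.1 (phi x).1 && winb ec x.2 (phi x).2.
  move=> x; rewrite /phi; case: pickP => [w /andP[/andP[_ ->] ->] //|_].
  rewrite /dflt /= !val_insubd erm // ecn // /winb !leqnn !andbT.
  have := ltn_ord x.1; have := ltn_ord x.2.
  case: (posnP x.1) => H1; case: (posnP x.2) => H2 Hx2 Hx1.
  - lia.
  - have := Hec x.2.-1; rewrite prednK //; move/(_ Hx2); lia.
  - have := Her x.1.-1; rewrite prednK //; move/(_ Hx1); lia.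
  - have := Hec x.2.-1; rewrite prednK //; move/(_ Hx2).
    have := Her x.1.-1; rewrite prednK //; move/(_ Hx1); lia.
exists phi; split; [|split].
- move=> x Px; rewrite /phi; case: pickP => [w /andP[/andP[-> _] _] //|Hn].
  by have [w Hw'] := Hw x Px; have := Hn w; rewrite Hw'.
- move=> x1 x2 Hlt.
  have /andP[/andP[_ H1] _] := Hwin x1; have /andP[/andP[H2 _] _] := Hwin x2.
  have H2' : er (x2.1).-1 < (phi x2).1 by move: H2; lia.
  have := incr_le Her (a:=x1.1) (b:=(x2.1).-1); have := ltn_ord x2.1; lia.
- move=> x1 x2 Hlt.
  have /andP[_ /andP[_ H1]] := Hwin x1; have /andP[_ /andP[H2 _]] := Hwin x2.
  have H2' : ec (x2.2).-1 < (phi x2).2 by move: H2; lia.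
  have := incr_le Hec (a:=x1.2) (b:=(x2.2).-1); have := ltn_ord x2.2; lia.
Qed.

Lemma winb_le (e e' : nat -> nat) a v :
  (0 < a -> e a.-1 <= e' a.-1) -> e' a <= e a -> winb e' a v -> winb e a v.
Proof. rewrite /winb => H1 H2 /andP[H3 H4]; apply/andP; split; last by lia.
have [Ha|Ha] := posnP a; first by rewrite Ha.
have := H1 Ha; move: H3; lia. Qed.

Lemma winbI (e : nat -> nat) a v : (0 < a -> e a.-1 < v) -> v <= e a -> winb e a v.
Proof. rewrite /winb => H1 H2; apply/andP; split => //.
have [Ha|Ha] := posnP a; first by rewrite Ha.
by rewrite H1 // orbT. Qed.

Ltac clear_foralls := repeat match goal with
  | H : forall _, _ |- _ => clear H
  | H : is_true ?X |- _ =>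
      lazymatch X with
      | leq _ _ => fail
      | _ == _ => fail
      | negb _ => fail
      | orb _ _ => fail
      | andb _ _ => fail
      | _ => clear H
      end
  | H : ?X = false |- _ =>
      lazymatch X with
      | leq _ _ => fail
      | _ == _ => fail
      | _ => clear H
      end
  end.
Ltac lia' := clear_foralls; lia.


Section Hi.
Variables (k l m n : nat) (phi : 'I_k * 'I_l -> 'I_m * 'I_n).
Hypothesis Hrow : forall x1 x2 : 'I_k * 'I_l, x1.1 < x2.1 -> (phi x1).1 < (phi x2).1.
Hypothesis Hcol : forall x1 x2 : 'I_k * 'I_l, x1.2 < x2.2 -> (phi x1).2 < (phi x2).2.

Definition rhi (a : nat) := \max_(x : 'I_k * 'I_l | x.1 == a :> nat) (phi x).1.
Definition chi (b : nat) := \max_(x : 'I_k * 'I_l | x.2 == b :> nat) (phi x).2.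

Lemma rhi_ge (x : 'I_k * 'I_l) : (phi x).1 <= rhi x.1.
Proof. exact: (leq_bigmax_cond (P := fun y : 'I_k * 'I_l => y.1 == x.1 :> nat)). Qed.
Lemma chi_ge (x : 'I_k * 'I_l) : (phi x).2 <= chi x.2.
Proof. exact: (leq_bigmax_cond (P := fun y : 'I_k * 'I_l => y.2 == x.2 :> nat)). Qed.

Lemma rhi_arg a (y0 : 'I_k * 'I_l) : a < k -> exists y : 'I_k * 'I_l, y.1 = a :> nat /\ rhi a = (phi y).1.
Proof.
move=> Ha.
have H0 : 0 < #|[pred y : 'I_k * 'I_l | y.1 == a :> nat]|.
  apply/card_gt0P; exists (Ordinal Ha, y0.2); by rewrite inE.
have [y Hy Heq] := eq_bigmax_cond (fun x : 'I_k * 'I_l => (phi x).1) H0.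
exists y; split; first by move: Hy; rewrite inE => /eqP.
by rewrite -Heq; apply: eq_bigl => x; rewrite inE.
Qed.
Lemma chi_arg b (y0 : 'I_k * 'I_l) : b < l -> exists y : 'I_k * 'I_l, y.2 = b :> nat /\ chi b = (phi y).2.
Proof.
move=> Hb.
have H0 : 0 < #|[pred y : 'I_k * 'I_l | y.2 == b :> nat]|.
  apply/card_gt0P; exists (y0.1, Ordinal Hb); by rewrite inE.
have [y Hy Heq] := eq_bigmax_cond (fun x : 'I_k * 'I_l => (phi x).2) H0.
exists y; split; first by move: Hy; rewrite inE => /eqP.
by rewrite -Heq; apply: eq_bigl => x; rewrite inE.
Qed.

Lemma rhi_lt a (x : 'I_k * 'I_l) : a < x.1 -> rhi a < (phi x).1.
Proof.
move=> Ha; have Hak : a < k by have := ltn_ord x.1; lia.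
have [y [Hy ->]] := rhi_arg x Hak; apply: Hrow; lia.
Qed.
Lemma chi_lt b (x : 'I_k * 'I_l) : b < x.2 -> chi b < (phi x).2.
Proof.
move=> Hb; have Hbl : b < l by have := ltn_ord x.2; lia.
have [y [Hy ->]] := chi_arg x Hbl; apply: Hcol; lia.
Qed.

Lemma rchain d (y : 'I_k * 'I_l) : y.1 + d < k ->
  exists z : 'I_k * 'I_l, z.1 = y.1 + d :> nat /\ (phi y).1 + d <= (phi z).1.
Proof.
elim: d => [|d IH] H; first by exists y; rewrite !addn0.
have H' : y.1 + d < k by rewrite addnS in H; exact: ltnW.
have [z [Hz1 Hz2]] := IH H'.
exists (Ordinal H, y.2); split => //.
have : z.1 < (Ordinal H, y.2).1 by rewrite /= Hz1 addnS.
move/Hrow; lia.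
Qed.
Lemma cchain d (y : 'I_k * 'I_l) : y.2 + d < l ->
  exists z : 'I_k * 'I_l, z.2 = y.2 + d :> nat /\ (phi y).2 + d <= (phi z).2.
Proof.
elim: d => [|d IH] H; first by exists y; rewrite !addn0.
have H' : y.2 + d < l by rewrite addnS in H; exact: ltnW.
have [z [Hz1 Hz2]] := IH H'.
exists (y.1, Ordinal H); split => //.
have : z.2 < (y.1, Ordinal H).2 by rewrite /= Hz1 addnS.
move/Hcol; lia.
Qed.

Lemma rhi_bound a (y0 : 'I_k * 'I_l) : a < k -> rhi a + (k.-1 - a) < m.
Proof.
move=> Ha; have [y [Hy ->]] := rhi_arg y0 Ha.
have Hd : y.1 + (k.-1 - a) < k by rewrite Hy; lia.
have [z [_ Hz]] := rchain Hd.
have := ltn_ord (phi z).1; lia.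
Qed.
Lemma chi_bound b (y0 : 'I_k * 'I_l) : b < l -> chi b + (l.-1 - b) < n.
Proof.
move=> Hb; have [y [Hy ->]] := chi_arg y0 Hb.
have Hd : y.2 + (l.-1 - b) < l by rewrite Hy; lia.
have [z [_ Hz]] := cchain Hd.
have := ltn_ord (phi z).2; lia.
Qed.

Lemma rhi_incr a (y0 : 'I_k * 'I_l) : a.+1 < k -> rhi a < rhi a.+1.
Proof. move=> Ha; have [y [Hy ->]] := rhi_arg y0 Ha; apply: rhi_lt; lia. Qed.
Lemma chi_incr b (y0 : 'I_k * 'I_l) : b.+1 < l -> chi b < chi b.+1.
Proof. move=> Hb; have [y [Hy ->]] := chi_arg y0 Hb; apply: chi_lt; lia. Qed.
End Hi.


Section Core.
Variables (k l m n : nat) (P : 'M[bool]_(k, l)) (M : 'M[bool]_(m, n)).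
Variables (r1 r2 : 'I_k) (c1 c2 : 'I_l) (i : 'I_m).
Hypothesis Hav : avoids P M.

Definition crit (j : 'I_n) (phi : 'I_k * 'I_l -> 'I_m * 'I_n) :=
  M i j = false /\ is_embedding P (switch_entry M (i, j)) phi /\ phi (r1, c1) = (i, j).

Lemma crit_row j phi : crit j phi -> forall x1 x2 : 'I_k * 'I_l, x1.1 < x2.1 -> (phi x1).1 < (phi x2).1.
Proof using . by case=> _ [[_ [H _]] _]. Qed.
Lemma crit_col j phi : crit j phi -> forall x1 x2 : 'I_k * 'I_l, x1.2 < x2.2 -> (phi x1).2 < (phi x2).2.
Proof using . by case=> _ [[_ [_ H]] _]. Qed.
Lemma crit_e1 j phi : crit j phi -> (phi (r1, c1)).1 = i.
Proof using . by case=> _ [_ ->]. Qed.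
Lemma crit_e2 j phi : crit j phi -> (phi (r1, c1)).2 = j.
Proof using . by case=> _ [_ ->]. Qed.

Lemma cell_eq (x y : 'I_k * 'I_l) : x.1 = y.1 :> nat -> x.2 = y.2 :> nat -> x = y.
Proof using . by case: x y => [a b] [a' b'] /= H1 H2; congr pair; apply: val_inj. Qed.

Lemma emb_one j phi : crit j phi -> forall x : 'I_k * 'I_l, P x.1 x.2 -> x <> (r1, c1) ->
  M (phi x).1 (phi x).2.
Proof using .
move=> Hcr x Px Hx.
have [_ [[H1 [Hro Hco]] He]] := Hcr.
have := H1 x Px; rewrite /switch_entry mxE.
case: eqP => [Heq|//] _; exfalso; apply: Hx.
have Hr1 : (phi x).1 = i by move: Heq => [].
have Hc1 : (phi x).2 = j by move: Heq => [].
apply: cell_eq => /=.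
- case: (ltngtP x.1 r1) => // H.
  + by have := Hro x (r1, c1) H; rewrite He Hr1 ltnn.
  + by have := Hro (r1, c1) x H; rewrite He Hr1 ltnn.
- case: (ltngtP x.2 c1) => // H.
  + by have := Hco x (r1, c1) H; rewrite He Hc1 ltnn.
  + by have := Hco (r1, c1) x H; rewrite He Hc1 ltnn.
Qed.

Lemma move_e (He : P r1 c1) j phi (y : 'I_n) : crit j phi -> M i y ->
  (exists x : 'I_k * 'I_l, x.2 < c1 /\ y <= (phi x).2) \/
  (exists x : 'I_k * 'I_l, c1 < x.2 /\ (phi x).2 <= y).
Proof.
move=> Hcr My.
case: (boolP [exists x : 'I_k * 'I_l, (x.2 < c1) && (y <= (phi x).2)]).
  by move/existsP => [x /andP[H1 H2]]; left; exists x.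
move=> HL.
case: (boolP [exists x : 'I_k * 'I_l, (c1 < x.2) && ((phi x).2 <= y)]).
  by move/existsP => [x /andP[H1 H2]]; right; exists x.
move=> HR; exfalso; apply: Hav.
have [_ [[H1 [Hro Hco]] Hee]] := Hcr.
pose phi' (x : 'I_k * 'I_l) := if x == (r1, c1) then (i, y) else phi x.
have Hrow' : forall x, (phi' x).1 = (phi x).1.
  by move=> x; rewrite /phi'; case: eqP => // ->; rewrite Hee.
exists phi'; split; [|split].
- move=> x Px; rewrite /phi'; case: eqP => [_ //|Hx].
  exact: (emb_one Hcr Px Hx).
- by move=> x1 x2 H; rewrite !Hrow'; apply: Hro.
- move=> x1 x2 H; rewrite /phi'.
  case: eqP => [E1|N1]; case: eqP => [E2|N2] /=.
  + by move: H; rewrite E1 E2 ltnn.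
  + case: (ltnP y (phi x2).2) => // Hle; exfalso.
    move/negP: HR; apply; apply/existsP; exists x2; apply/andP; split => //.
    by move: H; rewrite E1.
  + case: (ltnP (phi x1).2 y) => // Hle; exfalso.
    move/negP: HL; apply; apply/existsP; exists x1; apply/andP; split => //.
    by move: H; rewrite E2.
  + exact: Hco.
Qed.

Lemma Bbound (He : P r1 c1) j phi (g : 'I_n) : crit j phi -> M i g -> j < g ->
  forall z : 'I_k * 'I_l, z.2 = c1 :> nat -> (phi z).2 < g.
Proof.
move=> Hcr Mg Hjg z Hz.
case: (move_e He Hcr Mg) => [[x [H1 H2]]|[x [H1 H2]]].
  have := crit_col Hcr (x1 := x) (x2 := (r1, c1)) H1; rewrite (crit_e2 Hcr); lia.
have := crit_col Hcr (x1 := z) (x2 := x); rewrite Hz => /(_ H1); lia.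
Qed.

Lemma Abound (He : P r1 c1) j phi (g : 'I_n) : crit j phi -> M i g -> g < j ->
  forall z : 'I_k * 'I_l, z.2 = c1 :> nat -> g < (phi z).2.
Proof.
move=> Hcr Mg Hjg z Hz.
case: (move_e He Hcr Mg) => [[x [H1 H2]]|[x [H1 H2]]].
  have := crit_col Hcr (x1 := x) (x2 := z); rewrite Hz => /(_ H1); lia.
have := crit_col Hcr (x1 := (r1, c1)) (x2 := x) H1; rewrite (crit_e2 Hcr); lia.
Qed.

End Core.


Section Seq.
Variables (k l m n : nat) (P : 'M[bool]_(k, l)) (M : 'M[bool]_(m, n)).
Variables (r1 r2 : 'I_k) (c1 c2 : 'I_l) (i : 'I_m).
Variables (T : nat) (jj gg : nat -> 'I_n) (ph : nat -> 'I_k * 'I_l -> 'I_m * 'I_n).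
Hypothesis Hcr : forall s, s < T -> crit P M r1 c1 i (jj s) (ph s).
Hypothesis Hsep : forall s, s.+1 < T -> [/\ jj s < gg s, gg s < jj s.+1 & M i (gg s)].

Let e0 : 'I_k * 'I_l := (r1, c1).
Notation R s := (rhi (ph s)).
Notation C s := (chi (ph s)).

Lemma gg_add s d : (s + d).+1 < T -> gg s + d <= gg (s + d).
Proof.
elim: d => [|d IH] H; first by rewrite !addn0.
have H' : (s + d).+1 < T by lia.
have := IH H'; have [_ H2 _] := Hsep H'; rewrite !addnS.
have H'' : (s + d).+2 < T by lia.
have [H3 _ _] := Hsep H''.
lia.
Qed.

Lemma wr s (x : 'I_k * 'I_l) : s < T -> winb (R s) x.1 (ph s x).1.
Proof.
move=> Hs; have Hro := crit_row (Hcr Hs); have Hco := crit_col (Hcr Hs).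
rewrite /winb rhi_ge // andbT; case: (posnP x.1) => [->//|H0]; apply/orP; right.
apply: rhi_lt => //; lia.
Qed.
Lemma wc s (x : 'I_k * 'I_l) : s < T -> winb (C s) x.2 (ph s x).2.
Proof.
move=> Hs; have Hro := crit_row (Hcr Hs); have Hco := crit_col (Hcr Hs).
rewrite /winb chi_ge // andbT; case: (posnP x.2) => [->//|H0]; apply/orP; right.
apply: chi_lt => //; lia.
Qed.
Lemma Rb s a : s < T -> a < k -> R s a + (k.-1 - a) < m.
Proof. move=> Hs Ha; have Hro := crit_row (Hcr Hs); exact: rhi_bound e0 Ha. Qed.
Lemma Cb s b : s < T -> b < l -> C s b + (l.-1 - b) < n.
Proof. move=> Hs Hb; have Hco := crit_col (Hcr Hs); exact: chi_bound e0 Hb. Qed.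
Lemma Ri s a : s < T -> a.+1 < k -> R s a < R s a.+1.
Proof. move=> Hs Ha; have Hro := crit_row (Hcr Hs); exact: rhi_incr e0 Ha. Qed.
Lemma Ci s b : s < T -> b.+1 < l -> C s b < C s b.+1.
Proof. move=> Hs Hb; have Hco := crit_col (Hcr Hs); exact: chi_incr e0 Hb. Qed.
Lemma Rlt s a (x : 'I_k * 'I_l) : s < T -> a < x.1 -> R s a < (ph s x).1.
Proof. move=> Hs Ha; have Hro := crit_row (Hcr Hs); exact: rhi_lt. Qed.
Lemma Clt s b (x : 'I_k * 'I_l) : s < T -> b < x.2 -> C s b < (ph s x).2.
Proof. move=> Hs Hb; have Hco := crit_col (Hcr Hs); exact: chi_lt. Qed.
Lemma Rge s (x : 'I_k * 'I_l) : s < T -> (ph s x).1 <= R s x.1.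
Proof. move=> Hs; exact: rhi_ge. Qed.
Lemma Cge s (x : 'I_k * 'I_l) : s < T -> (ph s x).2 <= C s x.2.
Proof. move=> Hs; exact: chi_ge. Qed.
Lemma e1 s : s < T -> (ph s e0).1 = i.
Proof. move=> Hs; exact: crit_e1 (Hcr Hs). Qed.
Lemma e2 s : s < T -> (ph s e0).2 = jj s.
Proof. move=> Hs; exact: crit_e2 (Hcr Hs). Qed.

Lemma jj_mono s t : s <= t -> t < T -> jj s <= jj t.
Proof.
move=> Hst Ht; elim: t Hst Ht => [|t IH] Hst Ht; first by rewrite leqn0 in Hst; move/eqP: Hst => ->.
case: (ltngtP s t.+1) Hst => // [Hlt|->] _; last by [].
have Ht' : t < T by lia'.
have := IH Hlt Ht'; have [H1 H2 _] := Hsep Ht; lia'.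
Qed.

Lemma gg_le s t : s <= t -> t.+1 < T -> gg s + (t - s) <= gg t.
Proof.
move=> Hst Ht; have H : (s + (t - s)).+1 < T by rewrite subnKC.
by have := gg_add H; rewrite subnKC.
Qed.

Lemma Cc2' t (cc : 'I_l) : c1 < cc -> t < T -> jj t < C t cc.
Proof.
move=> Hc Ht; have := crit_col (Hcr Ht) (x1 := e0) (x2 := (r1, cc)) Hc.
rewrite (e2 Ht) /=; have := Cge (r1, cc) Ht; rewrite /=; lia'.
Qed.

End Seq.


Section T1.
Variables (k l m n : nat) (P : 'M[bool]_(k, l)) (M : 'M[bool]_(m, n)).
Variables (r1 r2 : 'I_k) (c1 c2 : 'I_l) (i : 'I_m).
Hypothesis Hr : r1 < r2.
Hypothesis Hc : c1 < c2.
Hypothesis Hav : avoids P M.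
Hypothesis He : P r1 c1.
Variables (T : nat) (jj gg : nat -> 'I_n) (ph : nat -> 'I_k * 'I_l -> 'I_m * 'I_n).
Hypothesis Hcr : forall s, s < T -> crit P M r1 c1 i (jj s) (ph s).
Hypothesis Hsep : forall s, s.+1 < T -> [/\ jj s < gg s, gg s < jj s.+1 & M i (gg s)].
Hypothesis Ht1 : forall x : 'I_k * 'I_l, P x.1 x.2 ->
  (r1 <= x.1 <= r2 /\ x.2 = c1 :> nat) \/
  ((x.1 = r1 :> nat \/ x.1 = r2 :> nat) /\ (x.2 <= c1 \/ x.2 = c2 :> nat)).

Let e0 : 'I_k * 'I_l := (r1, c1).
Notation R s := (rhi (ph s)).
Notation C s := (chi (ph s)).

Lemma AB s t : s <= t -> t < T -> (s + (c2 - c1)).+1 < T -> gg (s + (c2 - c1)) <= C t c2 ->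
  (P r2 c2 -> R s r2.-1 < (ph t (r2, c2)).1 /\ gg s + (c2 - c1) <= (ph t (r2, c2)).2) -> False.
Proof.
move=> Hst Ht HsD HgC Hr2c2.
have Hs : s < T by lia'.
have Hr2k := ltn_ord r2; have Hc2l := ltn_ord c2.
have H0k : 0 < k by lia'.
have Rb0 := Rb Hcr Hs H0k.
have Rbs := Rb Hcr Hs Hr2k; have Rbt := Rb Hcr Ht Hr2k.
have Hs1 : s.+1 < T by lia'.
have [Hjg Hgj Mg] := Hsep Hs1.
have [_ _ MgD] := Hsep HsD.
have HgD := gg_add Hsep HsD.
have Hjs := e2 Hcr Hs; have His := e1 Hcr Hs.
have wcs0 := wc Hcr e0 Hs; have wrs0 := wr Hcr e0 Hs.
rewrite /e0 /= in wcs0 wrs0 Hjs His; rewrite Hjs His in wcs0 wrs0.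
apply: Hav.
pose er a := if a < r2 then R s a else m - k + a.
pose ec b := if b < c1 then C s b else if b < c2 then gg s + (b - c1) else C t b.
have erL a : a < r2 -> er a = R s a by move=> Ha; rewrite /er Ha.
have erG a : r2 <= a -> er a = m - k + a by move=> Ha; rewrite /er ltnNge Ha.
have ecL b : b < c1 -> ec b = C s b by move=> Hb; rewrite /ec Hb.
have ecM b : c1 <= b -> b < c2 -> ec b = gg s + (b - c1).
  by move=> Hb1 Hb2; rewrite /ec ltnNge Hb1 Hb2.
have ecG b : c2 <= b -> ec b = C t b.
  by move=> Hb; rewrite /ec !ltnNge Hb (leq_trans (ltnW Hc) Hb).
have Cse : forall b, b < c1 -> C s b < gg s.
  by move=> b Hb; have := Clt Hcr (x := e0) Hs Hb; rewrite Hjs; lia'.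
apply: (@block_embed _ _ _ _ P M i (gg s) er ec).
- move=> a Ha; case: (ltnP a.+1 r2) => H1.
    have H0 : a < r2 by lia'.
    by rewrite (erL _ H0) (erL _ H1); have := Ri Hcr Hs Ha; exact.
  case: (ltnP a r2) => H2.
    rewrite (erL _ H2) (erG _ H1).
    have := Ri Hcr Hs Ha; have := Rb Hcr Hs Ha; lia'.
  have H3 : r2 <= a.+1 by lia'.
  rewrite (erG _ H2) (erG _ H3); lia'.
- have H : r2 <= k.-1 by lia'.
  rewrite (erG _ H); lia'.
- move=> b Hb; case: (ltnP b.+1 c1) => H1.
    have H0 : b < c1 by lia'.
    by rewrite (ecL _ H0) (ecL _ H1); have := Ci Hcr Hs Hb; exact.
  case: (ltnP b c1) => H2.
    have H3 : b.+1 < c2 by lia'.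
    rewrite (ecL _ H2) (ecM _ H1 H3); have := Cse _ H2; lia'.
  case: (ltnP b.+1 c2) => H3.
    have H4 : b < c2 by lia'.
    rewrite (ecM _ H2 H4) (ecM _ H1 H3); lia'.
  case: (ltnP b c2) => H4.
    have E : b.+1 = c2 by lia'.
    rewrite (ecM _ H2 H4) (ecG _ H3) E; lia'.
  have H5 : c2 <= b by lia'.
  by rewrite (ecG _ H5) (ecG _ H3); have := Ci Hcr Ht Hb; exact.
- have H : c2 <= l.-1 by lia'.
  have Hl : l.-1 < l by lia'.
  rewrite (ecG _ H); have := Cb Hcr Ht Hl; lia'.
have Hrow_s : forall y : 'I_k * 'I_l, y.1 <= r2 -> winb er y.1 (ph s y).1.
  move=> y Hy; apply: winb_le (wr Hcr y Hs).
    by move=> Hy0; rewrite erL //; lia'.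
  case: (ltnP y.1 r2) => Hy2; first by rewrite erL.
  rewrite erG //; have := Rb Hcr Hs (ltn_ord y.1); lia'.
have Hre0 : winb er r1 i.
  by have := Hrow_s e0; rewrite /= His; apply; exact: ltnW.
move=> x Px.
have Hx1 := ltn_ord x.1; have Hx2 := ltn_ord x.2.
have Hcl : (r1 <= x.1 <= r2) /\ (x.2 <= c1 \/ x.2 = c2 :> nat) /\
           (x.2 = c1 :> nat \/ x.1 = r1 :> nat \/ x.1 = r2 :> nat).
  by case: (Ht1 Px); lia'.
have Hxr : x.1 <= r2 by lia'.
case: (ltngtP x.2 c1) => Hxc.
- have Hxe : x <> e0 by move=> Ex; move: Hxc; rewrite Ex ltnn.
  exists (ph s x); rewrite (emb_one (Hcr Hs) Px Hxe) /= Hrow_s //=.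
  apply: winb_le (wc Hcr x Hs); last by rewrite ecL.
  by move=> _; rewrite ecL //; lia'.
-
  have Hxc2 : x.2 = c2 :> nat by lia'.
  case: (eqVneq (x.1 : nat) r1) => Hx1r.
  + have Ex : x = (r1, c2) by apply: cell_eq.
    exists (i, gg (s + (c2 - c1))); rewrite MgD /= Ex /= Hre0 /=.
    apply: winbI => [Hp|].
      have H1 : c1 <= c2.-1 by lia'.
      have H2 : c2.-1 < c2 by lia'.
      rewrite (ecM _ H1 H2); lia'.
    by rewrite ecG.
  + have Ex : x = (r2, c2) by apply: cell_eq => /=; lia'.
    have Pr2 : P r2 c2 by move: Px; rewrite Ex.
    have [Hrow Hcol] := Hr2c2 Pr2.
    have Htx : (r2, c2) <> e0 by move=> [E1 _]; move: Hr; rewrite E1 ltnn.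
    exists (ph t (r2, c2)); rewrite (@emb_one _ _ _ _ P M r1 c1 i _ _ (Hcr Ht) (r2, c2) Pr2 Htx) Ex /=.
    have := Rge ph (r2, c2) Ht; have := Cge ph (r2, c2) Ht; rewrite /= => HC HR.
    apply/andP; split.
      apply: winbI => [Hp|]; first by rewrite erL //; lia'.
      by rewrite erG //; lia'.
    apply: winbI => [Hp|]; last by rewrite ecG.
    have H1 : c1 <= c2.-1 by lia'.
    have H2 : c2.-1 < c2 by lia'.
    rewrite (ecM _ H1 H2); lia'.
-
  case: (eqVneq (x.1 : nat) r1) => Hx1r.
  + have Ex : x = e0 by apply: cell_eq.
    exists (i, gg s); rewrite Mg /= Ex /= Hre0 /=.
    apply: winbI => [Hp|]; last by rewrite ecM //; lia'.
    have H1 : c1.-1 < c1 by lia'.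
    rewrite (ecL _ H1); exact: Cse.
  + have Hxe : x <> e0 by move=> Ex; move: Hx1r; rewrite Ex eqxx.
    have Hb := Bbound Hav He (Hcr Hs) Mg Hjg Hxc.
    exists (ph s x); rewrite (emb_one (Hcr Hs) Px Hxe) /= Hrow_s //=.
    apply: winbI => [Hp|]; last by rewrite ecM; lia'.
    have H1 : x.2.-1 < c1 by lia'.
    rewrite (ecL _ H1); move: (wc Hcr x Hs); rewrite /winb; lia'.
Qed.

Notation w s := (nat_of_ord (ph s (r2, c2)).2).

Lemma Cons t (sb : nat -> nat) : t < T -> 0 < t -> P r2 c2 ->
  (forall b, b < c1 -> 0 < sb b /\ sb b < T) ->
  (forall b, 0 < b -> b < c1 -> w (sb b.-1) < gg (sb b).-1) ->
  (0 < c1 -> w (sb c1.-1) < gg t.-1) ->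
  (forall b, b < c1 -> R t r2.-1 < (ph (sb b) (r2, c2)).1) -> False.
Proof.
move=> Ht Ht0 HPr2 Hsb Hw Hwt Hrw.
have Hr2k := ltn_ord r2; have Hc2l := ltn_ord c2.
have H0k : 0 < k by lia'.
have Rb0 := Rb Hcr Ht H0k.
have Rbt := Rb Hcr Ht Hr2k.
have Ht1' : t.-1.+1 < T by lia'.
have [Hjg Hgj Mg] := Hsep Ht1'.
rewrite prednK // in Hgj.
have Hjt := e2 Hcr Ht; have Hit := e1 Hcr Ht.
have Htx : (r2, c2) <> e0 by move=> [E1 _]; move: Hr; rewrite E1 ltnn.
have Hjw : forall s, s < T -> jj s < w s.
  move=> s Hs; have := crit_col (Hcr Hs) (x1 := e0) (x2 := (r2, c2)) Hc.
  by rewrite (e2 Hcr Hs).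
have Hgw : forall b, b < c1 -> gg (sb b).-1 < w (sb b).
  move=> b Hb; have [H1 H2] := Hsb b Hb.
  have H3 : (sb b).-1.+1 < T by lia'.
  have [_ H4 _] := Hsep H3; rewrite prednK // in H4.
  have := Hjw _ H2; lia'.
have Mgb : forall b, b < c1 -> M i (gg (sb b).-1).
  move=> b Hb; have [H1 H2] := Hsb b Hb.
  have H3 : (sb b).-1.+1 < T by lia'.
  by have [_ _ ->] := Hsep H3.
have Mw : forall b, b < c1 -> M (ph (sb b) (r2, c2)).1 (ph (sb b) (r2, c2)).2.
  move=> b Hb; have [H1 H2] := Hsb b Hb.
  exact: (@emb_one _ _ _ _ P M r1 c1 i _ _ (Hcr H2) (r2, c2) HPr2 Htx).
have CtA : jj t <= C t c1 by have := Cge ph e0 Ht; rewrite /= Hjt.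
apply: Hav.
pose er a := if a < r2 then R t a else m - k + a.
pose ec b := if b < c1 then w (sb b) else C t b.
have erL a : a < r2 -> er a = R t a by move=> Ha; rewrite /er Ha.
have erG a : r2 <= a -> er a = m - k + a by move=> Ha; rewrite /er ltnNge Ha.
have ecL b : b < c1 -> ec b = w (sb b) by move=> Hb; rewrite /ec Hb.
have ecG b : c1 <= b -> ec b = C t b by move=> Hb; rewrite /ec ltnNge Hb.
apply: (@block_embed _ _ _ _ P M i (gg t.-1) er ec).
- move=> a Ha; case: (ltnP a.+1 r2) => H1.
    have H0 : a < r2 by lia'.
    by rewrite (erL _ H0) (erL _ H1); have := Ri Hcr Ht Ha; exact.
  case: (ltnP a r2) => H2.
    rewrite (erL _ H2) (erG _ H1).
    have := Ri Hcr Ht Ha; have := Rb Hcr Ht Ha; lia'.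
  have H3 : r2 <= a.+1 by lia'.
  rewrite (erG _ H2) (erG _ H3); lia'.
- have H : r2 <= k.-1 by lia'.
  rewrite (erG _ H); lia'.
- move=> b Hb; case: (ltnP b.+1 c1) => H1.
    have H0 : b < c1 by lia'.
    rewrite (ecL _ H0) (ecL _ H1).
    have := Hw b.+1 (ltn0Sn _) H1; have := Hgw _ H1; rewrite /=; lia'.
  case: (ltnP b c1) => H2.
    have E : b = c1.-1 by lia'.
    rewrite (ecL _ H2) (ecG _ H1).
    have E1 : b.+1 = c1 by lia'.
    have := Hwt (leq_ltn_trans (leq0n _) H2); rewrite E1 -E; lia'.
  have H3 : c1 <= b.+1 by lia'.
  by rewrite (ecG _ H2) (ecG _ H3); have := Ci Hcr Ht Hb; exact.
- have H : c1 <= l.-1 by lia'.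
  have Hl : l.-1 < l by lia'.
  rewrite (ecG _ H); have := Cb Hcr Ht Hl; lia'.
have Hrow_t : forall y : 'I_k * 'I_l, y.1 <= r2 -> winb er y.1 (ph t y).1.
  move=> y Hy; apply: winb_le (wr Hcr y Ht).
    by move=> Hy0; rewrite erL //; lia'.
  case: (ltnP y.1 r2) => Hy2; first by rewrite erL.
  rewrite erG //; have := Rb Hcr Ht (ltn_ord y.1); lia'.
have Hre0 : winb er r1 i.
  by have := Hrow_t e0; rewrite /= Hit; apply; exact: ltnW.
have Hrr2 : forall b, b < c1 -> winb er r2 (ph (sb b) (r2, c2)).1.
  move=> b Hb; have [H1 H2] := Hsb b Hb.
  apply: winbI => [Hp|]; first by rewrite erL; [exact: Hrw| lia'].
  rewrite erG //; have := Rge ph (r2, c2) H2; have := Rb Hcr H2 Hr2k; rewrite /=; lia'.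
have Hcolb : forall b, b < c1 -> ((0 < b) -> ec b.-1 < gg (sb b).-1).
  move=> b Hb Hp; have H1 : b.-1 < c1 by lia'.
  by rewrite (ecL _ H1); exact: Hw.
move=> x Px.
have Hx1 := ltn_ord x.1; have Hx2 := ltn_ord x.2.
have Hcl : (r1 <= x.1 <= r2) /\ (x.2 <= c1 \/ x.2 = c2 :> nat) /\
           (x.2 = c1 :> nat \/ x.1 = r1 :> nat \/ x.1 = r2 :> nat).
  by case: (Ht1 Px); lia'.
have Hxr : x.1 <= r2 by lia'.
case: (ltngtP x.2 c1) => Hxc.
- case: (eqVneq (x.1 : nat) r1) => Hx1r.
  + exists (i, gg (sb x.2).-1); rewrite Mgb //= Hx1r Hre0 /=.
    apply: winbI; first exact: Hcolb.
    by rewrite ecL //; have := Hgw _ Hxc; lia'.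
  + have Ex : x = (r2, (x.2)) by apply: cell_eq => /=; lia'.
    exists (ph (sb x.2) (r2, c2)); rewrite Mw //=.
    have -> : (x.1 : nat) = r2 by lia'.
    rewrite Hrr2 //=.
    apply: winbI => [Hp|]; last by rewrite ecL.
    have := Hcolb _ Hxc Hp; have := Hgw _ Hxc; lia'.
- have Hxe : x <> e0 by move=> Ex; move: Hxc; rewrite Ex ltnn.
  exists (ph t x); rewrite (emb_one (Hcr Ht) Px Hxe) /= Hrow_t //=.
  apply: winb_le (wc Hcr x Ht); last by rewrite ecG //; lia'.
  by move=> Hp; rewrite ecG //; lia'.
- case: (eqVneq (x.1 : nat) r1) => Hx1r.
  + have Ex : x = e0 by apply: cell_eq.
    exists (i, gg t.-1); rewrite Mg /= Ex /= Hre0 /=.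
    apply: winbI => [Hp|]; last by rewrite ecG //; lia'.
    have H1 : c1.-1 < c1 by lia'.
    rewrite (ecL _ H1); exact: Hwt.
  + have Hxe : x <> e0 by move=> Ex; move: Hx1r; rewrite Ex eqxx.
    have Hb := Abound Hav He (Hcr Ht) Mg Hgj Hxc.
    exists (ph t x); rewrite (emb_one (Hcr Ht) Px Hxe) /= Hrow_t //=.
    apply: winbI => [Hp|]; last by rewrite ecG; [have := Cge ph x Ht; lia' | lia'].
    have H1 : c1.-1 < c1 by lia'.
    have Hp' : 0 < c1 by lia'.
    have -> : x.2.-1 = c1.-1 by lia'.
    rewrite (ecL _ H1); have := Hwt Hp'; lia'.
Qed.

Lemma type1_contra : 1 + (c1.+1 * (c2 - c1).+1) < T -> False.
Proof.
move=> HT.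
have HD : 0 < c2 - c1 by lia'.
rewrite mulSn in HT.
case HP : (P r2 c2).
2:{ apply: (@AB 0 (c2 - c1).+1) => //; first by lia'.
    - by rewrite add0n; lia'.
    - rewrite add0n; have HT1 : (c2 - c1).+1 < T by lia'.
      have := Cc2' Hcr Hc HT1; have [_ H2 _] := Hsep HT1; lia'.
    - by rewrite HP. }
pose sb b := 1 + b * (c2 - c1).+1.
pose t := 1 + c1 * (c2 - c1).+1.
have HtT : t < T by rewrite /t; lia'.
have Hsbt : forall b, b < c1 -> sb b + (c2 - c1) < t.
  move=> b Hb; rewrite /sb /t.
  have : b * (c2 - c1).+1 + (c2 - c1).+1 <= c1 * (c2 - c1).+1 by rewrite addnC -mulSn leq_mul2r Hb orbT.
  lia'.
have notA : forall s, s + (c2 - c1) < t -> w s < gg (s + (c2 - c1)).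
  move=> s Hs; case: (ltnP (w s) (gg (s + (c2 - c1)))) => // Hge; exfalso.
  have HsT : s < T by lia'.
  have HsD : (s + (c2 - c1)).+1 < T by lia'.
  apply: (@AB s s) => //.
    by have := Cge ph (r2, c2) HsT; rewrite /=; lia'.
  move=> _; split.
    by apply: (Rlt Hcr) => //=; lia'.
  by have := gg_add Hsep HsD; lia'.
have notAB : forall s, s + (c2 - c1) < t -> (ph t (r2, c2)).1 <= R s r2.-1.
  move=> s Hs; case: (ltnP (R s r2.-1) (ph t (r2, c2)).1) => // Hlt; exfalso.
  have HsT : s < T by lia'.
  have HsD : (s + (c2 - c1)).+1 < T by lia'.
  apply: (@AB s t) => //; first by lia'.
    have Hle : (s + (c2 - c1)).+1 <= t by lia'.
    have := Cc2' Hcr Hc HtT; have := jj_mono Hsep Hle HtT.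
    have [_ H2 _] := Hsep HsD; lia'.
  move=> _; split => //.
  have := crit_col (Hcr HtT) (x1 := e0) (x2 := (r2, c2)) Hc; rewrite (e2 Hcr HtT) /=.
  have Hle : (s + (c2 - c1)).+1 <= t by lia'.
  have := jj_mono Hsep Hle HtT.
  have [_ H2 _] := Hsep HsD; have := gg_add Hsep HsD; lia'.
apply: (@Cons t sb).
- exact: HtT.
- by rewrite /t; lia'.
- exact: HP.
- move=> b Hb; have := Hsbt b Hb; rewrite /sb; lia'.
- move=> b Hb0 Hb; have E : (sb b).-1 = sb b.-1 + (c2 - c1).
    rewrite /sb; case: b Hb0 Hb => [//|b] _ _ /=; rewrite mulSn; lia'.
  rewrite E; apply: notA; have := Hsbt b Hb; rewrite /sb; case: b Hb0 Hb E => [//|b] _ _ _ /=.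
  rewrite mulSn; lia'.
- move=> Hc0; have E : t.-1 = sb c1.-1 + (c2 - c1).
    rewrite /t /sb; case: (c1 : nat) Hc0 => [//|c] _ /=; rewrite mulSn; lia'.
  rewrite E; apply: notA; have Hc1 : c1.-1 < c1 by lia'.
  have := Hsbt _ Hc1; lia'.
- move=> b Hb; have Hs := Hsbt b Hb.
  have HsT : sb b < T by lia'.
  have := notAB _ Hs.
  have Hr2' : r2.-1 < (r2, c2).1 by rewrite /=; lia'.
  have := Rlt Hcr HtT Hr2'; have := Rlt Hcr HsT Hr2'.
  lia'.
Qed.

End T1.


Section T2.
Variables (k l m n : nat) (P : 'M[bool]_(k, l)) (M : 'M[bool]_(m, n)).
Variables (r1 r2 : 'I_k) (c1 c2 : 'I_l) (i : 'I_m).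
Hypothesis Hr : r1 < r2.
Hypothesis Hc : c1 < c2.
Hypothesis Hav : avoids P M.
Hypothesis He : P r1 c1.
Variables (T : nat) (jj gg : nat -> 'I_n) (ph : nat -> 'I_k * 'I_l -> 'I_m * 'I_n).
Hypothesis Hcr : forall s, s < T -> crit P M r1 c1 i (jj s) (ph s).
Hypothesis Hsep : forall s, s.+1 < T -> [/\ jj s < gg s, gg s < jj s.+1 & M i (gg s)].
Hypothesis Ht2 : forall x : 'I_k * 'I_l, P x.1 x.2 ->
  (r1 <= x.1 <= r2 /\ x.2 = c1 :> nat) \/
  (x.1 = r2 :> nat /\ (x.2 <= c1 \/ x.2 = c2 :> nat)) \/
  (x.1 <= r1 /\ x.2 = c2 :> nat).

Let e0 : 'I_k * 'I_l := (r1, c1).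
Notation R s := (rhi (ph s)).
Notation C s := (chi (ph s)).

Lemma T2a s t : s < t -> t < T -> R t r2.-1 <= R s r2.-1 -> False.
Proof.
move=> Hst Ht HR.
have Hs : s < T by lia'.
have Hr2k := ltn_ord r2; have Hc2l := ltn_ord c2.
have H0k : 0 < k by lia'.
have Rb0 := Rb Hcr Ht H0k.
have Ht1' : t.-1.+1 < T by lia'.
have [Hjg Hgj Mg] := Hsep Ht1'.
rewrite prednK in Hgj; last by lia'.
have Hs1 : s.+1 < T by lia'.
have [Hjgs _ _] := Hsep Hs1.
have Hgg : gg s <= gg t.-1 by have := gg_le Hsep (s := s) (t := t.-1) (ltac:(lia')) Ht1'; lia'.
have Hjt := e2 Hcr Ht; have Hit := e1 Hcr Ht; have Hjs := e2 Hcr Hs.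
have CtA : jj t <= C t c1 by have := Cge ph e0 Ht; rewrite /= Hjt.
have Cse : forall b, b < c1 -> C s b < gg t.-1.
  by move=> b Hb; have := Clt Hcr (x := e0) Hs Hb; rewrite Hjs; lia'.
apply: Hav.
pose er a := if a < r2 then R t a else m - k + a.
pose ec b := if b < c1 then C s b else C t b.
have erL a : a < r2 -> er a = R t a by move=> Ha; rewrite /er Ha.
have erG a : r2 <= a -> er a = m - k + a by move=> Ha; rewrite /er ltnNge Ha.
have ecL b : b < c1 -> ec b = C s b by move=> Hb; rewrite /ec Hb.
have ecG b : c1 <= b -> ec b = C t b by move=> Hb; rewrite /ec ltnNge Hb.
apply: (@block_embed _ _ _ _ P M i (gg t.-1) er ec).
- move=> a Ha; case: (ltnP a.+1 r2) => H1.
    have H0 : a < r2 by lia'.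
    by rewrite (erL _ H0) (erL _ H1); have := Ri Hcr Ht Ha; exact.
  case: (ltnP a r2) => H2.
    rewrite (erL _ H2) (erG _ H1).
    have := Ri Hcr Ht Ha; have := Rb Hcr Ht Ha; lia'.
  have H3 : r2 <= a.+1 by lia'.
  rewrite (erG _ H2) (erG _ H3); lia'.
- have H : r2 <= k.-1 by lia'.
  rewrite (erG _ H); lia'.
- move=> b Hb; case: (ltnP b.+1 c1) => H1.
    have H0 : b < c1 by lia'.
    by rewrite (ecL _ H0) (ecL _ H1); have := Ci Hcr Hs Hb; exact.
  case: (ltnP b c1) => H2.
    have E1 : b.+1 = c1 by lia'.
    rewrite (ecL _ H2) (ecG _ H1) E1; have := Cse _ H2; lia'.
  have H3 : c1 <= b.+1 by lia'.
  by rewrite (ecG _ H2) (ecG _ H3); have := Ci Hcr Ht Hb; exact.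
- have H : c1 <= l.-1 by lia'.
  have Hl : l.-1 < l by lia'.
  rewrite (ecG _ H); have := Cb Hcr Ht Hl; lia'.
have Hrow_t : forall y : 'I_k * 'I_l, y.1 <= r2 -> winb er y.1 (ph t y).1.
  move=> y Hy; apply: winb_le (wr Hcr y Ht).
    by move=> Hy0; rewrite erL //; lia'.
  case: (ltnP y.1 r2) => Hy2; first by rewrite erL.
  rewrite erG //; have := Rb Hcr Ht (ltn_ord y.1); lia'.
have Hre0 : winb er r1 i.
  by have := Hrow_t e0; rewrite /= Hit; apply; exact: ltnW.
move=> x Px.
have Hx1 := ltn_ord x.1; have Hx2 := ltn_ord x.2.
have Hcl : x.1 <= r2 /\ (x.2 < c1 -> x.1 = r2 :> nat) /\ (x.2 = c1 :> nat -> r1 <= x.1) /\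
           (x.2 <= c1 \/ x.2 = c2 :> nat).
  by case: (Ht2 Px) => [|[|]]; lia'.
have Hxr : x.1 <= r2 by lia'.
case: (ltngtP x.2 c1) => Hxc.
- have Hxe : x <> e0 by move=> Ex; move: Hxc; rewrite Ex ltnn.
  have Ex1 : (x.1 : nat) = r2 by lia'.
  exists (ph s x); rewrite (emb_one (Hcr Hs) Px Hxe) /=.
  apply/andP; split.
    have := wr Hcr x Hs; rewrite /winb Ex1 => /andP[Ha Hb].
    have HRb := Rb Hcr Hs (ltn_ord x.1); rewrite Ex1 in HRb.
    have := Rge ph x Hs; rewrite Ex1 => HRg.
    apply: winbI => [Hp|]; first by rewrite erL; lia'.
    by rewrite erG //; lia'.
  apply: winb_le (wc Hcr x Hs); last by rewrite ecL.
  by move=> _; rewrite ecL //; lia'.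
- have Hxe : x <> e0 by move=> Ex; move: Hxc; rewrite Ex ltnn.
  exists (ph t x); rewrite (emb_one (Hcr Ht) Px Hxe) /= Hrow_t //=.
  apply: winb_le (wc Hcr x Ht); last by rewrite ecG //; lia'.
  by move=> Hp; rewrite ecG //; lia'.
- case: (eqVneq (x.1 : nat) r1) => Hx1r.
  + have Ex : x = e0 by apply: cell_eq.
    exists (i, gg t.-1); rewrite Mg /= Ex /= Hre0 /=.
    apply: winbI => [Hp|]; last by rewrite ecG //; lia'.
    have H1 : c1.-1 < c1 by lia'.
    rewrite (ecL _ H1); exact: Cse.
  + have Hxe : x <> e0 by move=> Ex; move: Hx1r; rewrite Ex eqxx.
    have Hb := Abound Hav He (Hcr Ht) Mg Hgj Hxc.
    exists (ph t x); rewrite (emb_one (Hcr Ht) Px Hxe) /= Hrow_t //=.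
    apply: winbI => [Hp|]; last by rewrite ecG; [have := Cge ph x Ht; lia' | lia'].
    have H1 : c1.-1 < c1 by lia'.
    have -> : x.2.-1 = c1.-1 by lia'.
    rewrite (ecL _ H1); have := Cse _ H1; lia'.
Qed.

Lemma T2b s t : s + (c2 - c1) < t -> t < T -> R s r2.-1 < R t r2.-1 -> False.
Proof.
move=> Hst Ht HR.
have Hs : s < T by lia'.
have Hr2k := ltn_ord r2; have Hc2l := ltn_ord c2.
have H0k : 0 < k by lia'.
have Rb0 := Rb Hcr Hs H0k.
have Ht1' : t.-1.+1 < T by lia'.
have [Hjg Hgj Mg] := Hsep Ht1'.
rewrite prednK in Hgj; last by lia'.
have Hs1 : s.+1 < T by lia'.
have [Hjgs _ Mgs] := Hsep Hs1.
have HgD : gg s + (c2 - c1) <= gg t.-1.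
  by have := gg_le Hsep (s := s) (t := t.-1) (ltac:(lia')) Ht1'; lia'.
have Hjt := e2 Hcr Ht; have Hit := e1 Hcr Ht; have Hjs := e2 Hcr Hs; have His := e1 Hcr Hs.
have Ctc2 := Cc2' Hcr Hc Ht.
have Cse : forall b, b < c1 -> C s b < gg s.
  by move=> b Hb; have := Clt Hcr (x := e0) Hs Hb; rewrite Hjs; lia'.
have Hjx : forall x : 'I_k * 'I_l, c1 < x.2 -> jj t < (ph t x).2.
  by move=> x Hx; have := crit_col (Hcr Ht) (x1 := e0) (x2 := x) Hx; rewrite Hjt.
apply: Hav.
pose er a := if a < r1 then R t a else if a < r2 then R s a else m - k + a.
pose ec b := if b < c1 then C s b else if b < c2 then gg s + (b - c1) else C t b.
have erL a : a < r1 -> er a = R t a by move=> Ha; rewrite /er Ha.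
have erM a : r1 <= a -> a < r2 -> er a = R s a by move=> H1 H2; rewrite /er ltnNge H1 H2.
have erG a : r2 <= a -> er a = m - k + a.
  by move=> Ha; rewrite /er !ltnNge Ha (leq_trans (ltnW Hr) Ha).
have ecL b : b < c1 -> ec b = C s b by move=> Hb; rewrite /ec Hb.
have ecM b : c1 <= b -> b < c2 -> ec b = gg s + (b - c1).
  by move=> Hb1 Hb2; rewrite /ec ltnNge Hb1 Hb2.
have ecG b : c2 <= b -> ec b = C t b.
  by move=> Hb; rewrite /ec !ltnNge Hb (leq_trans (ltnW Hc) Hb).
apply: (@block_embed _ _ _ _ P M i (gg s) er ec).
- move=> a Ha; case: (ltnP a.+1 r1) => H1.
    have H0 : a < r1 by lia'.
    by rewrite (erL _ H0) (erL _ H1); have := Ri Hcr Ht Ha; exact.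
  case: (ltnP a r1) => H2.
    have E1 : a.+1 = r1 by lia'.
    have H3 : a.+1 < r2 by lia'.
    rewrite (erL _ H2) (erM _ H1 H3) E1.
    have Ha' : a < e0.1 by rewrite /=; lia'.
    have := Rlt Hcr Ht Ha'; have := Rge ph e0 Hs; rewrite /= Hit His; lia'.
  case: (ltnP a.+1 r2) => H3.
    have H4 : a < r2 by lia'.
    by rewrite (erM _ H2 H4) (erM _ H1 H3); have := Ri Hcr Hs Ha; exact.
  case: (ltnP a r2) => H4.
    rewrite (erM _ H2 H4) (erG _ H3).
    have := Ri Hcr Hs Ha; have := Rb Hcr Hs Ha; lia'.
  have H5 : r2 <= a by lia'.
  rewrite (erG _ H5) (erG _ H3); lia'.
- have H : r2 <= k.-1 by lia'.
  rewrite (erG _ H); lia'.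
- move=> b Hb; case: (ltnP b.+1 c1) => H1.
    have H0 : b < c1 by lia'.
    by rewrite (ecL _ H0) (ecL _ H1); have := Ci Hcr Hs Hb; exact.
  case: (ltnP b c1) => H2.
    have H3 : b.+1 < c2 by lia'.
    rewrite (ecL _ H2) (ecM _ H1 H3); have := Cse _ H2; lia'.
  case: (ltnP b.+1 c2) => H3.
    have H4 : b < c2 by lia'.
    rewrite (ecM _ H2 H4) (ecM _ H1 H3); lia'.
  case: (ltnP b c2) => H4.
    have E : b.+1 = c2 by lia'.
    rewrite (ecM _ H2 H4) (ecG _ H3) E; lia'.
  have H5 : c2 <= b by lia'.
  by rewrite (ecG _ H5) (ecG _ H3); have := Ci Hcr Ht Hb; exact.
- have H : c2 <= l.-1 by lia'.
  have Hl : l.-1 < l by lia'.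
  rewrite (ecG _ H); have := Cb Hcr Ht Hl; lia'.
have Hre0 : winb er r1 i.
  apply: winbI => [Hp|].
    have H1 : r1.-1 < r1 by lia'.
    rewrite (erL _ H1); have Ha' : r1.-1 < e0.1 by rewrite /=; lia'.
    by have := Rlt Hcr Ht Ha'; rewrite /= Hit.
  have H1 : r1 < r2 by lia'.
  rewrite (erM _ (leqnn _) H1); have := Rge ph e0 Hs; rewrite /= His; lia'.
have Hrow_s : forall y : 'I_k * 'I_l, r1 < y.1 -> y.1 <= r2 -> winb er y.1 (ph s y).1.
  move=> y Hy1 Hy; apply: winb_le (wr Hcr y Hs).
    by move=> Hy0; rewrite erM //; lia'.
  case: (ltnP y.1 r2) => Hy2; first by rewrite erM //; lia'.
  rewrite erG //; have := Rb Hcr Hs (ltn_ord y.1); lia'.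
have Hcol_t : forall y : 'I_k * 'I_l, y.2 = c2 :> nat -> winb ec y.2 (ph t y).2.
  move=> y Hy; have Hj : jj t < (ph t y).2 by apply: Hjx; rewrite Hy.
  apply: winbI => [Hp|]; last by rewrite ecG; [have := Cge ph y Ht; lia' | lia'].
  rewrite ecM; lia'.
move=> x Px.
have Hx1 := ltn_ord x.1; have Hx2 := ltn_ord x.2.
have Hcl : x.1 <= r2 /\ (x.2 < c1 -> x.1 = r2 :> nat) /\ (x.2 = c1 :> nat -> r1 <= x.1) /\
           (x.2 <= c1 \/ x.2 = c2 :> nat) /\ (c1 < x.2 -> x.1 <= r1 \/ x.1 = r2 :> nat).
  by case: (Ht2 Px) => [|[|]]; lia'.
case: (ltngtP x.2 c1) => Hxc.
- have Hxe : x <> e0 by move=> Ex; move: Hxc; rewrite Ex ltnn.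
  have Ex1 : (x.1 : nat) = r2 by lia'.
  exists (ph s x); rewrite (emb_one (Hcr Hs) Px Hxe) /= Hrow_s //=; [|lia'|lia'].
  apply: winb_le (wc Hcr x Hs); last by rewrite ecL.
  by move=> _; rewrite ecL //; lia'.
- have Hxc2 : x.2 = c2 :> nat by lia'.
  case: (ltngtP x.1 r1) => Hx1r.
  + have Hxe : x <> e0 by move=> Ex; move: Hxc; rewrite Ex ltnn.
    exists (ph t x); rewrite (emb_one (Hcr Ht) Px Hxe) /= Hcol_t // andbT.
    apply: winb_le (wr Hcr x Ht); last by rewrite erL.
    by move=> _; rewrite erL //; lia'.
  + have Ex1 : (x.1 : nat) = r2 by lia'.
    have Hxe : x <> e0 by move=> Ex; move: Hxc; rewrite Ex ltnn.
    exists (ph t x); rewrite (emb_one (Hcr Ht) Px Hxe) /= Hcol_t // andbT.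
    have := wr Hcr x Ht; have := Rb Hcr Ht (ltn_ord x.1); have := Rge ph x Ht.
    rewrite /winb Ex1 => HRg HRb /andP[Ha Hb].
    apply: winbI => [Hp|]; last by rewrite erG //; lia'.
    by rewrite erM; lia'.
  + have Ex : x = (r1, c2) by apply: cell_eq.
    exists (i, gg t.-1); rewrite Mg /= Ex /= Hre0 /=.
    apply: winbI => [Hp|]; last by rewrite ecG //; lia'.
    rewrite ecM; lia'.
- case: (eqVneq (x.1 : nat) r1) => Hx1r.
  + have Ex : x = e0 by apply: cell_eq.
    exists (i, gg s); rewrite Mgs /= Ex /= Hre0 /=.
    apply: winbI => [Hp|]; last by rewrite ecM //; lia'.
    have H1 : c1.-1 < c1 by lia'.
    rewrite (ecL _ H1); exact: Cse.
  + have Hxe : x <> e0 by move=> Ex; move: Hx1r; rewrite Ex eqxx.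
    have Hb := Bbound Hav He (Hcr Hs) Mgs Hjgs Hxc.
    exists (ph s x); rewrite (emb_one (Hcr Hs) Px Hxe) /= Hrow_s //=; [|lia'|lia'].
    apply: winbI => [Hp|]; last by rewrite ecM; lia'.
    have H1 : x.2.-1 < c1 by lia'.
    rewrite (ecL _ H1); move: (wc Hcr x Hs); rewrite /winb; lia'.
Qed.

Lemma type2_contra : 1 + (c2 - c1).+1 < T -> False.
Proof.
move=> HT; have Ht : (c2 - c1).+1 < T by lia'.
case: (leqP (R (c2 - c1).+1 r2.-1) (R 0 r2.-1)) => H.
  by apply: (@T2a 0 (c2 - c1).+1) => //; lia'.
by apply: (@T2b 0 (c2 - c1).+1) => //; lia'.
Qed.

End T2.


Lemma runs_sep m n (M : 'M[bool]_(m, n)) (i : 'I_m) (a b a' b' : 'I_n) :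
  hzero_run M i a b -> hzero_run M i a' b' -> a <= a' -> (a, b) <> (a', b') ->
  exists g : 'I_n, b < g < a' /\ M i g.
Proof.
move=> [Hab [Hz [Hl Hr]]] [Hab' [Hz' [Hl' Hr']]] Haa Hne.
have Hn' := ltn_ord b'; have Hn := ltn_ord b.
case: (ltnP b a') => Hba.
  have Hbn : b.+1 < n by have := ltn_ord a'; lia'.
  have Mb := Hr (Ordinal Hbn) erefl.
  case: (ltnP b.+1 a') => Hb1.
    by exists (Ordinal Hbn); split => //; apply/andP; split.
  exfalso; have : M i (Ordinal Hbn) = false by apply: Hz'; apply/andP; split => /=; lia'.
  by rewrite Mb.
exfalso.
case: (ltngtP a a') Haa => // [Hlt|Heq] _.
  have Ha'n : a'.-1 < n by lia'.
  have Mx := Hl' (Ordinal Ha'n); rewrite /= prednK in Mx; last by lia'.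
  have : M i (Ordinal Ha'n) = false by apply: Hz; apply/andP; split => /=; lia'.
  by rewrite (Mx erefl).
case: (ltngtP b b') => Hbb.
- have Hbn : b.+1 < n by lia'.
  have Mb := Hr (Ordinal Hbn) erefl.
  have : M i (Ordinal Hbn) = false by apply: Hz'; apply/andP; split => /=; lia'.
  by rewrite Mb.
- have Hbn : b'.+1 < n by lia'.
  have Mb := Hr' (Ordinal Hbn) erefl.
  have : M i (Ordinal Hbn) = false by apply: Hz; apply/andP; split => /=; lia'.
  by rewrite Mb.
- by apply: Hne; congr pair; apply: val_inj.
Qed.

Lemma extract k l m n (P : 'M[bool]_(k, l)) (M : 'M[bool]_(m, n)) (r1 : 'I_k) (c1 : 'I_l)
  (i : 'I_m) (R : seq ('I_n * 'I_n)) :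
  0 < size R -> uniq R ->
  (forall ab, ab \in R -> critical_run P (r1, c1) M i ab.1 ab.2) ->
  exists (jj gg : nat -> 'I_n) (ph : nat -> 'I_k * 'I_l -> 'I_m * 'I_n),
    (forall s, s < size R -> crit P M r1 c1 i (jj s) (ph s)) /\
    (forall s, s.+1 < size R -> [/\ jj s < gg s, gg s < jj s.+1 & M i (gg s)]).
Proof.
move=> HR0 Hu HR.
case: R HR0 Hu HR => [//|d R0] _ Hu HR.
set R := d :: R0 in Hu HR *.
pose le2 := fun x y : 'I_n * 'I_n => (x.1 <= y.1).
have le2_tot : total le2 by move=> x y; rewrite /le2 leq_total.
have le2_tr : transitive le2 by move=> x y z; rewrite /le2; lia'.
have le2_refl : reflexive le2 by move=> x; rewrite /le2 leqnn.
pose S := sort le2 R.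
have HpS : perm_eq S R by rewrite perm_sort.
have HsS : size S = size R by rewrite size_sort.
have HuS : uniq S by rewrite (perm_uniq HpS).
have HsortS : sorted le2 S by apply: sort_sorted.
have HinS : forall s, s < size R -> nth d S s \in R.
  by move=> s Hs; rewrite -(perm_mem HpS) mem_nth // HsS.
have Hch : forall s, exists p : 'I_n * ('I_k * 'I_l -> 'I_m * 'I_n),
    s < size R -> (nth d S s).1 <= p.1 <= (nth d S s).2 /\ crit P M r1 c1 i p.1 p.2.
  move=> s; case: (ltnP s (size R)) => Hs; last by exists (d.1, fun _ => (i, d.1)).
  have [_ [j [Hj [Hj0 [phi [Hphi Hphie]]]]]] := HR _ (HinS s Hs).
  by exists (j, phi) => _; split => //; split => //.
pose f s := proj1_sig (constructive_indefinite_description _ (Hch s)).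
have Hf : forall s, s < size R -> (nth d S s).1 <= (f s).1 <= (nth d S s).2 /\ crit P M r1 c1 i (f s).1 (f s).2.
  by move=> s; exact: (proj2_sig (constructive_indefinite_description _ (Hch s))).
have Hrun : forall s, s < size R -> hzero_run M i (nth d S s).1 (nth d S s).2.
  by move=> s Hs; have [] := HR _ (HinS s Hs).
have Hg : forall s, exists g : 'I_n, s.+1 < size R ->
    (nth d S s).2 < g < (nth d S s.+1).1 /\ M i g.
  move=> s; case: (ltnP s.+1 (size R)) => Hs; last by exists d.1.
  have Hs' : s < size R by lia'.
  have Hle : le2 (nth d S s) (nth d S s.+1).
    apply: (sorted_leq_nth le2_tr le2_refl) => //; rewrite inE HsS //.
  have Hne : nth d S s <> nth d S s.+1.
    move=> E; have := nth_uniq d (s := S) (i := s) (j := s.+1); rewrite !HsS => /(_ Hs' Hs HuS).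
    by rewrite E eqxx => /esym; rewrite eqn_leq ltnn andbF.
  have Hne' : ((nth d S s).1, (nth d S s).2) <> ((nth d S s.+1).1, (nth d S s.+1).2).
    by rewrite -!surjective_pairing.
  have [g Hg] := runs_sep (Hrun _ Hs') (Hrun _ Hs) Hle Hne'.
  by exists g.
pose gf s := proj1_sig (constructive_indefinite_description _ (Hg s)).
have Hgf : forall s, s.+1 < size R -> (nth d S s).2 < gf s < (nth d S s.+1).1 /\ M i (gf s).
  by move=> s; exact: (proj2_sig (constructive_indefinite_description _ (Hg s))).
exists (fun s => (f s).1), gf, (fun s => (f s).2); split.
  by move=> s Hs; have [_ H] := Hf s Hs.
move=> s Hs; have Hs' : s < size R by lia'.
have [H1 _] := Hf s Hs'; have [H2 _] := Hf s.+1 Hs.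
have [H3 H4] := Hgf s Hs.
split => //; lia'.
Qed.


Theorem lemma3p12 (k l : nat) (P : 'M[bool]_(k, l)) (r1 r2 : 'I_k) (c1 c2 : 'I_l) :
  (r1 < r2)%N -> (c1 < c2)%N ->
  pattern_type1 P r1 r2 c1 c2 \/ pattern_type2 P r1 r2 c1 c2 ->
  P r1 c1 = true ->
  row_bounding P (r1, c1).
Proof.
move=> Hr Hc Ht He.
exists (1 + c1.+1 * (c2 - c1).+1) => m n M Hav i R Hu HR.
case: (leqP (size R) (1 + c1.+1 * (c2 - c1).+1)) => // HK; exfalso.
have HR0 : 0 < size R := leq_ltn_trans (leq0n _) HK.
have [jj [gg [ph [Hcr Hsep]]]] := extract HR0 Hu HR.
have He' : P r1 c1 by rewrite He.
case: Ht => Ht.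
- have Ht1 : forall x : 'I_k * 'I_l, P x.1 x.2 ->
    (r1 <= x.1 <= r2 /\ x.2 = c1 :> nat) \/
    ((x.1 = r1 :> nat \/ x.1 = r2 :> nat) /\ (x.2 <= c1 \/ x.2 = c2 :> nat)).
    move=> x Px; case: (Ht _ _ Px) => [[H1 H2]|[H1 H2]].
      by left; split => //; rewrite H2.
    right; split.
      by case: H1 => ->; [left|right].
    by case: H2 => [H| ->]; [left|right].
  exact: (type1_contra Hr Hc Hav He' Hcr Hsep Ht1 HK).
- have Ht2 : forall x : 'I_k * 'I_l, P x.1 x.2 ->
    (r1 <= x.1 <= r2 /\ x.2 = c1 :> nat) \/
    (x.1 = r2 :> nat /\ (x.2 <= c1 \/ x.2 = c2 :> nat)) \/
    (x.1 <= r1 /\ x.2 = c2 :> nat).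
    move=> x Px; case: (Ht _ _ Px) => [[H1 H2]|[[H1 H2]|[H1 H2]]].
    + by left; split => //; rewrite H2.
    + right; left; split; first by rewrite H1.
      by case: H2 => [H| ->]; [left|right].
    + by right; right; split => //; rewrite H2.
  have Hm : (c2 - c1).+1 <= c1.+1 * (c2 - c1).+1 by rewrite leq_pmull.
  have HK' : 1 + (c2 - c1).+1 < size R by lia'.
  exact: (type2_contra Hr Hc Hav He' Hcr Hsep Ht2 HK').
Qed.
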